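(* Let $\mathcal V$ be a finite-dimensional Euclidean space, consider linear losses $f_t(x)=\langle g_t,x\rangle$ and uniform delay $\tau$, i.e. $\mathcal S_t=\{1,\dots,t-\tau-1\}$ for all $t$. Run DODA with guesses $\tilde g_{t+1/2}=g_{t-\tau-1}$ and constant learning rates $\eta=r/\sqrt{(2\tau+1)V^{\tau+1}_T}$, $\gamma=(2\tau+1)\eta$, where $r\ge\|p-x_1\|$ and $V^{\tau+1}_T>0$. Then \[R_T(p)\le r\sqrt{(2\tau+1)V^{\tau+1}_T}.\]
   Context: DODA (unconstrained Euclidean): given $x_1\in\mathcal V$, $x_t=x_1-\eta_t\sum_{s\in\mathcal S_t}g_{s+1/2}$ and $x_{t+1/2}=x_t-\gamma_t\tilde g_{t+1/2}$; the played point at round $t$ is $x_{t+1/2}$, with feedback $g_{t+1/2}=\nabla f_t(x_{t+1/2})$, which for linear losses equals $g_t$. Regret: $R_T(p)=\sum_{t=1}^Tf_t(x_{t+1/2})-\sum_{t=1}^Tf_t(p)$. Convention $g_t=0$ for $t\le0$. The $(\tau+1)$-variation is $V^{\tau+1}_T=\sum_{t=1}^T\|g_t-g_{t-\tau-1}\|^2$. *)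

(* Defs.v *)
From HB Require Import structures.
From mathcomp Require Import all_boot all_order all_algebra.
From mathcomp Require Import reals.
Set Implicit Arguments. Unset Strict Implicit. Unset Printing Implicit Defensive.
Import Order.TTheory GRing.Theory Num.Theory.
Local Open Scope ring_scope.

Section DODA.
Variables (R : realType) (n : nat).

Definition dot (u v : 'rV[R]_n) : R := \sum_(i < n) u 0 i * v 0 i.
Definition enorm (u : 'rV[R]_n) : R := Num.sqrt (dot u u).

(* g : nat -> V gives g_t for t >= 1; convention g_t = 0 for t <= 0.
   gshift g d t = g_{t-d} (zero when t - d <= 0). *)
Definition gshift (g : nat -> 'rV[R]_n) (d t : nat) : 'rV[R]_n :=
  if (d < t)%N then g (t - d)%N else 0.

(* DODA with uniform delay tau, S_t = {1,...,t-tau-1}, linear losses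
   (so g_{s+1/2} = g_s), constant rates eta, gamma. *)
Definition doda_x (x1 : 'rV[R]_n) (g : nat -> 'rV[R]_n) (tau : nat) (eta : R)
  (t : nat) : 'rV[R]_n :=
  x1 - eta *: \sum_(1 <= s < (t - tau)%N) g s.

(* played point x_{t+1/2} with guess g~_{t+1/2} = g_{t-tau-1} *)
Definition doda_play (x1 : 'rV[R]_n) (g : nat -> 'rV[R]_n) (tau : nat)
  (eta gamma : R) (t : nat) : 'rV[R]_n :=
  doda_x x1 g tau eta t - gamma *: gshift g tau.+1 t.

Definition regret (x1 : 'rV[R]_n) (g : nat -> 'rV[R]_n) (tau : nat)
  (eta gamma : R) (T : nat) (p : 'rV[R]_n) : R :=
  \sum_(1 <= t < T.+1) (dot (g t) (doda_play x1 g tau eta gamma t) - dot (g t) p).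

Definition variation (g : nat -> 'rV[R]_n) (tau T : nat) : R :=
  \sum_(1 <= t < T.+1) enorm (g t - gshift g tau.+1 t) ^+ 2.

End DODA.

(* Main.v *)
Require Import Defs.
From HB Require Import structures.
From mathcomp Require Import all_boot all_order all_algebra.
From mathcomp Require Import reals.
From mathcomp Require Import lra zify.
Import Order.TTheory GRing.Theory Num.Theory.
Local Open Scope ring_scope.

Set Implicit Arguments.
Section Aux.
Variables (R : realType) (n : nat).
Implicit Types (u v w : 'rV[R]_n) (g : nat -> 'rV[R]_n).

Lemma dotC u v : dot u v = dot v u.
Proof. by rewrite /dot; apply: eq_bigr => i _; rewrite mulrC. Qed.
Lemma dotDl u v w : dot (u + v) w = dot u w + dot v w.
Proof. by rewrite /dot -big_split; apply: eq_bigr => i _; rewrite mxE mulrDl. Qed.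
Lemma dotZl a u v : dot (a *: u) v = a * dot u v.
Proof. by rewrite /dot mulr_sumr; apply: eq_bigr => i _; rewrite mxE mulrA. Qed.
Lemma dotNl u v : dot (- u) v = - dot u v.
Proof. by rewrite /dot -sumrN; apply: eq_bigr => i _; rewrite mxE mulNr. Qed.
Lemma dot0l v : dot 0 v = 0.
Proof. by rewrite /dot big1 // => i _; rewrite mxE mul0r. Qed.
Lemma dotBl u v w : dot (u - v) w = dot u w - dot v w.
Proof. by rewrite dotDl dotNl. Qed.
Lemma dotDr u v w : dot w (u + v) = dot w u + dot w v.
Proof. by rewrite dotC dotDl !(dotC w). Qed.
Lemma dotBr u v w : dot w (u - v) = dot w u - dot w v.
Proof. by rewrite dotC dotBl !(dotC w). Qed.
Lemma dotZr a u v : dot v (a *: u) = a * dot v u.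
Proof. by rewrite dotC dotZl dotC. Qed.
Lemma dot0r v : dot v 0 = 0.
Proof. by rewrite dotC dot0l. Qed.
Lemma dot_ge0 u : 0 <= dot u u.
Proof. by rewrite /dot sumr_ge0 // => i _; rewrite -expr2 sqr_ge0. Qed.
Lemma enorm_sq u : enorm u ^+ 2 = dot u u.
Proof. by rewrite /enorm sqr_sqrtr // dot_ge0. Qed.
Lemma dot_suml (I : Type) (r : seq I) (P : pred I) (F : I -> 'rV[R]_n) v :
  dot (\sum_(i <- r | P i) F i) v = \sum_(i <- r | P i) dot (F i) v.
Proof. exact: (big_morph (fun x => dot x v) (fun x y => dotDl x y v) (dot0l v)). Qed.
Lemma dot_sumr (I : Type) (r : seq I) (P : pred I) (F : I -> 'rV[R]_n) v :
  dot v (\sum_(i <- r | P i) F i) = \sum_(i <- r | P i) dot v (F i).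
Proof. by rewrite dotC dot_suml; apply: eq_bigr => i _; rewrite dotC. Qed.
Lemma two_dot u v : 2 * dot u v <= dot u u + dot v v.
Proof.
have := dot_ge0 (u - v); rewrite !dotBl !dotBr (dotC v u); lra.
Qed.

Lemma dotNN u : dot (- u) (- u) = dot u u.
Proof. by rewrite dotNl dotC dotNl opprK. Qed.

Lemma quad u v a : 0 <= dot u u - 2 * a * dot v u + a ^+ 2 * dot v v.
Proof.
have := dot_ge0 (u - a *: v); rewrite !dotBl !dotBr !dotZl !dotZr (dotC u v); lra.
Qed.

Definition Gs g m := \sum_(1 <= s < m) g s.

Lemma GsS g m : Gs g m = Gs g m.-1 + (if (1 < m)%N then g m.-1 else 0).
Proof.
case: m => [|[|m]]; rewrite /Gs.
- by rewrite addr0.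
- by rewrite addr0 !big_geq.
- by rewrite big_nat_recr.
Qed.

Lemma GsSS g m : Gs g m.+2 = Gs g m.+1 + g m.+1.
Proof. by rewrite /Gs big_nat_recr. Qed.

Lemma Gs_diff g tau t :
  Gs g t - Gs g (t - tau) = \sum_(0 <= k < tau) gshift g k.+1 t.
Proof.
elim: tau => [|tau IH]; first by rewrite subn0 subrr big_geq.
rewrite big_nat_recr //= -IH subnS (GsS g (t - tau)) /gshift.
have -> : (1 < t - tau)%N = (tau.+1 < t)%N by apply/idP/idP; lia.
by rewrite subnS opprD addrA addrNK.
Qed.

Lemma sum_shift (f : nat -> R) k T :
  \sum_(1 <= t < T.+1) (if (k < t)%N then f (t - k)%N else 0)
  = \sum_(1 <= s < T.+1 - k) f s.
Proof.
elim: T => [|T IH]; first by rewrite !big_geq // leq_subr.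
rewrite big_nat_recr //= IH; case: ifP => hk.
  have -> : (T.+2 - k = (T.+1 - k).+1)%N by lia.
  by rewrite [in RHS]big_nat_recr /=; last by lia.
rewrite addr0 !big_geq //; lia.
Qed.

Lemma sum_mono (f : nat -> R) m M : (forall s, 0 <= f s) -> (m <= M)%N ->
  \sum_(1 <= s < m) f s <= \sum_(1 <= s < M) f s.
Proof.
move=> f0 /subnKC <-; elim: (M - m)%N => [|d IH]; first by rewrite addn0.
rewrite addnS; case: (ltnP 0 (m + d)) => h.
  rewrite big_nat_recr //=; apply: le_trans IH _; by rewrite lerDl.
rewrite !big_geq //; lia.
Qed.

Lemma telescope g T :
  dot (Gs g T.+1) (Gs g T.+1) =
  \sum_(1 <= t < T.+1) (2 * dot (g t) (Gs g t) + dot (g t) (g t)).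
Proof.
elim: T => [|T IH]; first by rewrite /Gs !big_geq // dot0l.
rewrite GsSS big_nat_recr //= -IH !dotDl !dotDr (dotC (Gs g T.+1)); lra.
Qed.

End Aux.
Arguments Gs {R n}.
Arguments sum_shift {R}.
Arguments sum_mono {R}.
Arguments quad {R n}.
Arguments dotNN {R n}.
Arguments GsS {R n}.
Arguments GsSS {R n}.
Arguments Gs_diff {R n}.
Arguments telescope {R n}.
Arguments dot_sumr {R n}.
Arguments dot_suml {R n}.
Arguments dot0r {R n}.
Arguments dotZr {R n}.
Arguments dotBr {R n}.
Arguments dotDr {R n}.
Arguments dotBl {R n}.
Arguments dot0l {R n}.
Arguments dotNl {R n}.
Arguments dotZl {R n}.
Arguments dotDl {R n}.
Arguments dotC {R n}.
Arguments dot_ge0 {R n}.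
Arguments enorm_sq {R n}.
Arguments two_dot {R n}.

Theorem corollary2 (R : realType) (n : nat) (x1 p : 'rV[R]_n)
  (g : nat -> 'rV[R]_n) (tau T : nat) (r eta gamma : R) :
  enorm (p - x1) <= r ->
  0 < variation g tau T ->
  eta = r / Num.sqrt ((2 * tau + 1)%:R * variation g tau T) ->
  gamma = (2 * tau + 1)%:R * eta ->
  regret x1 g tau eta gamma T p <= r * Num.sqrt ((2 * tau + 1)%:R * variation g tau T).
Proof.
move=> hr hV heta hgam.
set V := variation g tau T in hV heta *.
set c : R := (2 * tau + 1)%:R in heta hgam *.
have hc : c = 2 * tau%:R + 1 by rewrite /c natrD natrM.
set s := Num.sqrt (c * V) in heta *.
have cV0 : 0 < c * V by rewrite mulr_gt0 // hc; apply: ltr_pwDr => //; rewrite mulr_ge0.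
have s0 : 0 < s by rewrite sqrtr_gt0.
have ss : s ^+ 2 = c * V by rewrite sqr_sqrtr // ltW.
set w := x1 - p.
set G := Gs g T.+1.
set h := gshift g tau.+1.
set N := \sum_(1 <= t < T.+1) dot (g t) (g t).
set W2 := \sum_(1 <= t < T.+1) dot (g t) (Gs g t).
set P := \sum_(1 <= t < T.+1) dot (g t) (Gs g (t - tau)).
set Q := \sum_(1 <= t < T.+1) dot (g t) (h t).
set H := \sum_(1 <= t < T.+1) dot (h t) (h t).
set Y := \sum_(1 <= t < T.+1) \sum_(0 <= k < tau) dot (gshift g k.+1 t) (gshift g k.+1 t).
have F1 : regret x1 g tau eta gamma T p = dot G w - eta * P - gamma * Q.
  rewrite /regret /G /Gs dot_suml /P /Q mulr_sumr mulr_sumr -!sumrB.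
  apply: eq_bigr => t _; rewrite /doda_play /doda_x /w !dotBr !dotZr -/(Gs g _); lra.
have F2 : dot G G = 2 * W2 + N.
  by rewrite /G telescope big_split /= -mulr_sumr.
have F3 : 0 <= dot w w - 2 * eta * dot G w + eta ^+ 2 * dot G G.
  exact: quad.
have F4 : 2 * (W2 - P) <= tau%:R * N + Y.
  rewrite /W2 /P /N /Y -sumrB mulr_sumr mulr_sumr -big_split /=.
  apply: ler_sum => t _.
  rewrite -dotBr Gs_diff dot_sumr mulr_sumr.
  apply: le_trans (_ : \sum_(0 <= k < tau) (dot (g t) (g t) +
     dot (gshift g k.+1 t) (gshift g k.+1 t)) <= _).
    by apply: ler_sum => k _; apply: two_dot.
  by rewrite big_split /= sumr_const_nat subn0 mulr_natl.
have F5 : Y <= tau%:R * N.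
  rewrite /Y exchange_big_nat /=.
  apply: le_trans (_ : \sum_(0 <= k < tau) N <= _).
    apply: ler_sum => k _.
    have -> : \sum_(1 <= t < T.+1) dot (gshift g k.+1 t) (gshift g k.+1 t)
       = \sum_(1 <= t < T.+1) (if (k.+1 < t)%N then
            (fun s => dot (g s) (g s)) (t - k.+1)%N else 0).
      by apply: eq_bigr => t _; rewrite /gshift; case: ifP => //; rewrite dot0l.
    rewrite (sum_shift (fun s => dot (g s) (g s))); apply: sum_mono => //; last by rewrite leq_subr.
    by move=> s'; apply: dot_ge0.
  by rewrite sumr_const_nat subn0 mulr_natl.
have F6 : V = N - 2 * Q + H.
  rewrite /V /variation /N /Q /H mulr_sumr -sumrB -big_split /=.
  apply: eq_bigr => t _; rewrite enorm_sq -/h !dotBl !dotBr (dotC (h t)); lra.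
have H0 : 0 <= H by apply: sumr_ge0 => t _; apply: dot_ge0.
have F7 : dot w w <= r ^+ 2.
  have e0 : 0 <= enorm (p - x1) by apply: sqrtr_ge0.
  have := enorm_sq (p - x1).
  have -> : dot (p - x1) (p - x1) = dot w w.
    by rewrite /w -opprB dotNN.
  move=> <-; rewrite lerXn2r // ?nnegrE //; lra.
have r0 : 0 <= r by apply: le_trans hr; apply: sqrtr_ge0.
rewrite F1.
have [rpos|] := ltrP 0 r; last first.
  move=> rle; have r00 : r = 0 by apply/eqP; rewrite eq_le rle r0.
  have e00 : eta = 0 by rewrite heta r00 mul0r.
  have ww : dot w w = 0 by apply/eqP; rewrite eq_le dot_ge0 andbT; move: F7; rewrite r00 expr0n.
  have wi : forall i, w 0 i = 0.
    move=> i; have H1 : w 0 i * w 0 i = 0.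
      by apply: (psumr_eq0P _ ww) => // j _; rewrite -expr2 sqr_ge0.
    by apply/eqP; rewrite -sqrf_eq0 expr2 H1.
  have dGw : dot G w = 0 by rewrite /dot big1 // => i _; rewrite wi mulr0.
  rewrite hgam e00 r00 dGw; lra.
have epos : 0 < eta by rewrite heta divr_gt0.
have es : eta * s = r by rewrite heta divfK // gt_eqF.
have E1 : eta ^+ 2 * (2 * W2 + N - 2 * P - 2 * c * Q) <= eta ^+ 2 * (c * V).
  apply: ler_wpM2l; first by rewrite sqr_ge0.
  have tH : 0 <= tau%:R * H by rewrite mulr_ge0.
  rewrite F6 hc; lra.
have E2 : eta ^+ 2 * (c * V) = r ^+ 2 by rewrite -ss -es exprMn.
have key : eta * (dot G w - eta * P - gamma * Q) <= eta * (r * s).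
  have -> : eta * (r * s) = r ^+ 2 by rewrite mulrC -mulrA (mulrC s) es expr2.
  rewrite hgam; rewrite F2 in F3; nra.
by rewrite ler_pM2l in key.
Qed.
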